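(* Let $G=(V,E)$ be a network with two sources $s_1,s_2$ and $n$ terminals $t_1,\dots,t_n$, such that for every $i\in\{1,2\}$ and $j\in\{1,\dots,n\}$ the max-flow from $s_i$ to $t_j$ is at least $1$ (i.e., there is a directed path from $s_i$ to $t_j$). Then there exists a linear network code (an assignment of coding vectors to all edges) over $\mathbb{F}=GF(2^m)$ such that every terminal $t_j$ can recover $X_1+X_2$ from the symbols on its incoming edges.
   Context: A network is a finite directed acyclic graph $G=(V,E)$ (parallel edges allowed) in which every edge has unit capacity and carries one symbol of a finite field $\mathbb{F}$ per use. Sources are vertices with no incoming edges; source $s_i$ holds $X_i\in\mathbb{F}$, the $X_i$ independent and uniformly distributed (unit entropy). Terminals are vertices with no outgoing edges. In a linear network code the symbol on an edge leaving a non-source vertex is an $\mathbb{F}$-linear combination of the symbols on the edges entering its tail, and the symbol on an edge leaving a source is a multiple of the source symbol. *)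

(* Defs.v *)
From HB Require Import structures.
From mathcomp Require Import all_boot all_order all_algebra all_field.
Set Implicit Arguments. Unset Strict Implicit. Unset Printing Implicit Defensive.
Import GRing.Theory.
Local Open Scope ring_scope.

(* A network: vertex type V, edge type E (parallel edges allowed),
   each edge e goes from [tl e] to [hd e]. *)
Section Network.
Variables (V E : finType) (tl hd : E -> V).

Fixpoint is_walk (u v : V) (p : seq E) : bool :=
  match p with
  | [::] => u == v
  | e :: p' => (tl e == u) && is_walk (hd e) v p'
  end.

Definition acyclic : Prop := forall (v : V) (p : seq E), is_walk v v p -> p = [::].

Definition reachable (u v : V) : Prop := exists p : seq E, is_walk u v p.

Definition is_source (v : V) : Prop := forall e : E, hd e != v.
Definition is_sink (v : V) : Prop := forall e : E, tl e != v.

(* Linear network code for two sources s1 s2, given by global coding vectors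
   c e in F^2 (row vectors; coordinate 0 = coefficient of X1, 1 = of X2),
   whose local encoding is linear:
   - an edge leaving s_i carries a multiple of X_i;
   - an edge leaving a non-source vertex carries an F-linear combination of
     the symbols on the edges entering its tail. *)
Definition linear_code (F : fieldType) (s1 s2 : V) (c : E -> 'rV[F]_2) : Prop :=
  forall e : E,
    (tl e = s1 -> exists a : F, c e = a *: delta_mx 0 (0 : 'I_2)) /\
    (tl e = s2 -> exists a : F, c e = a *: delta_mx 0 (1 : 'I_2)) /\
    (tl e <> s1 -> tl e <> s2 ->
       exists beta : E -> F, c e = \sum_(e' | hd e' == tl e) beta e' *: c e').

(* terminal t recovers X1 + X2: the coding vector (1,1) is a linear combination
   of the coding vectors of the edges entering t. *)
Definition recovers_sum (F : fieldType) (c : E -> 'rV[F]_2) (t : V) : Prop :=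
  exists d : E -> F, \sum_(e | hd e == t) d e *: c e = const_mx 1.

End Network.

(* Main.v *)
Require Import Defs.
From HB Require Import structures.
From mathcomp Require Import all_boot all_order all_algebra all_field.
From Stdlib Require Import ClassicalEpsilon.
Set Implicit Arguments. Unset Strict Implicit.
Import GRing.Theory.
Local Open Scope ring_scope.

Section Aux.
Variables (V E : finType) (tl hd : E -> V).

Lemma walk_rcons u w p e : is_walk tl hd u w p -> tl e == w ->
  is_walk tl hd u (hd e) (rcons p e).
Proof.
elim: p u => [|x p IH] u /=; first by move=> /eqP -> ->; rewrite eqxx.
by case/andP=> -> /IH H /H.
Qed.

Lemma walk_rconsE u v p e : is_walk tl hd u v (rcons p e) ->
  is_walk tl hd u (tl e) p && (hd e == v).
Proof.
elim: p u => [|x p IH] u /=; first by case/andP=> /eqP -> ->; rewrite eqxx.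
by case/andP=> -> /IH.
Qed.

Lemma reach_last u v : reachable tl hd u v -> u <> v ->
  exists e, hd e = v /\ reachable tl hd u (tl e).
Proof.
case=> p; case/lastP: p => [|p e] /=; first by move=> /eqP.
move=> /walk_rconsE /andP[H /eqP h] _; exists e; split => //; by exists p.
Qed.

Lemma reach_step u e : reachable tl hd u (tl e) -> reachable tl hd u (hd e).
Proof. case=> p H; exists (rcons p e); exact: (walk_rcons H (eqxx _)). Qed.

End Aux.

Section Span.
Variable F : fieldType.
Definition vec (x y : bool) : 'rV[F]_2 := \row_(k < 2) (if k == 0 then x%:R else y%:R).

Definition oind (I : finType) (o : option I) (k : I) : F :=
  if o is Some i then (k == i)%:R else 0.

Lemma oind_sum (I : finType) (P : pred I) (f : I -> 'rV[F]_2) o :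
  (if o is Some i then P i else true) ->
  \sum_(k | P k) oind o k *: f k = if o is Some i then f i else 0.
Proof.
case: o => [i|] /= Pi; last by rewrite big1 // => k _; rewrite scale0r.
rewrite (bigD1 i) //= eqxx scale1r big1 ?addr0 // => k /andP[_ /negbTE ->].
by rewrite scale0r.
Qed.

Lemma or_span (I : finType) (P : pred I) (a b : I -> bool) :
  exists beta : I -> F, \sum_(i | P i) beta i *: vec (a i) (b i) =
    vec [exists i, P i && a i] [exists i, P i && b i].
Proof.
case: (pickP (fun i => [&& P i, a i & b i])) => [i /and3P[Pi ai bi]|none].
  exists (oind (Some i)); rewrite (oind_sum (fun k => vec (a k) (b k))) //=.
  rewrite ai bi; congr vec; symmetry; apply/existsP; exists i; by rewrite Pi ?ai ?bi.
exists (fun k => oind [pick i | P i && a i] k + oind [pick i | P i && b i] k).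
under eq_bigr do rewrite scalerDl.
rewrite big_split /=.
have H1 : [exists i, P i && a i] = ([pick i | P i && a i] != None).
  case: pickP => [i /= Hi|N]; first by apply/existsP; exists i.
  by apply/existsP => -[i]; rewrite N.
have H2 : [exists i, P i && b i] = ([pick i | P i && b i] != None).
  case: pickP => [i /= Hi|N]; first by apply/existsP; exists i.
  by apply/existsP => -[i]; rewrite N.
rewrite H1 H2.
rewrite (oind_sum (fun k => vec (a k) (b k))); last by case: pickP => // i /andP[].
rewrite (oind_sum (fun k => vec (a k) (b k))); last by case: pickP => // i /andP[].
case: pickP => [i /andP[Pi ai]|_]; case: pickP => [j /andP[Pj bj]|_] /=.
- have nbi : b i = false by move: (none i); rewrite /= Pi ai.
  have naj : a j = false by move: (none j); rewrite /= Pj bj andbT.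
  by apply/rowP => k; rewrite !mxE ai bj nbi naj; case: ifP; rewrite ?add0r ?addr0.
- have nbi : b i = false by move: (none i); rewrite /= Pi ai.
  by apply/rowP => k; rewrite !mxE ai nbi addr0.
- have naj : a j = false by move: (none j); rewrite /= Pj bj andbT.
  by apply/rowP => k; rewrite !mxE bj naj add0r.
- by apply/rowP => k; rewrite !mxE addr0; case: ifP.
Qed.
End Span.

Theorem theorem1
  (F : finFieldType) (hF : (2%N \in [pchar F]))
  (V E : finType) (tl hd : E -> V)
  (hacyc : acyclic tl hd)
  (s1 s2 : V) (hs12 : s1 != s2)
  (hsrc : forall v : V, is_source hd v <-> (v = s1 \/ v = s2))
  (n : nat) (t : 'I_n -> V)
  (hterm : forall j : 'I_n, is_sink tl (t j))
  (hconn : forall j : 'I_n, reachable tl hd s1 (t j) /\ reachable tl hd s2 (t j)) :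
  exists c : E -> 'rV[F]_2,
    linear_code tl hd s1 s2 c /\ (forall j : 'I_n, recovers_sum hd c (t j)).
Proof.
pose rb u v : bool := if excluded_middle_informative (reachable tl hd u v) then true else false.
have rbP u v : reflect (reachable tl hd u v) (rb u v).
  rewrite /rb; case: excluded_middle_informative => H; by constructor.
have nosrc i j : (i = s1 \/ i = s2) -> j <> i -> ~ reachable tl hd j i.
  move=> Hi ji R; have [e [he _]] := reach_last R ji.
  by move: (proj2 (hsrc i) Hi e); rewrite he eqxx.
have s1s2 : s1 <> s2 by move/eqP: hs12.
have key u v : (u = s1 \/ u = s2) -> v <> s1 -> v <> s2 ->
    rb u v = [exists e', (hd e' == v) && rb u (tl e')].
  move=> hu v1 v2; apply/idP/existsP.
  - move/rbP => R; have uv : u <> v by case: hu => -> h; [apply: v1|apply: v2]; rewrite h.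
    have [e [he R']] := reach_last R uv.
    by exists e; rewrite he eqxx; apply/rbP.
  - case=> e /andP[/eqP he /rbP R]; apply/rbP; rewrite -he; exact: reach_step R.
pose c (e : E) : 'rV[F]_2 := vec F (rb s1 (tl e)) (rb s2 (tl e)).
have rb11 : rb s1 s1 by apply/rbP; exists [::]; exact: eqxx.
have rb22 : rb s2 s2 by apply/rbP; exists [::]; exact: eqxx.
have rb12 : rb s1 s2 = false by apply/rbP; apply: nosrc; [right|].
have rb21 : rb s2 s1 = false by apply/rbP; apply: nosrc; [left|move=> h; apply: s1s2].
exists c; split.
  move=> e; split; [|split].
  - move=> h; exists 1; rewrite /c h rb11 rb21 scale1r; apply/rowP => k.
    by rewrite !mxE; case: k => -[|[|]] //.
  - move=> h; exists 1; rewrite /c h rb22 rb12 scale1r; apply/rowP => k.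
    by rewrite !mxE; case: k => -[|[|]] //.
  - move=> h1 h2; have [beta Hb] := or_span F (fun e' => hd e' == tl e)
      (fun e' => rb s1 (tl e')) (fun e' => rb s2 (tl e')).
    by exists beta; rewrite Hb /c -!key; auto.
move=> j; have [R1 R2] := hconn j.
have t1 : t j <> s1 by move=> h; apply: (nosrc s1 s2 (or_introl erefl) (fun h => s1s2 (esym h))); rewrite -h.
have t2 : t j <> s2 by move=> h; apply: (nosrc s2 s1 (or_intror erefl) s1s2); rewrite -h.
have [beta Hb] := or_span F (fun e' => hd e' == t j)
      (fun e' => rb s1 (tl e')) (fun e' => rb s2 (tl e')).
exists beta; rewrite Hb -!key; auto.
move/rbP: R1 => ->; move/rbP: R2 => ->.
by apply/rowP => k; rewrite !mxE; case: ifP.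
Qed.
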